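(* Consider the $T$-round online first-price auction problem and the AR-OMD policy described in the context, with a suitable choice of its learning rate $\eta>0$ and grid precision $\epsilon$ (depending only on $T$), and assume the switching budget satisfies $L_T=o(T)$ and is unknown to the learner. Then \[ \sup_{(v_t,m_t)_{t=1}^T\in\mathcal{L}}\mathbb{E}[\mathrm{DR}_T(\pi)]=\tilde{O}(L_T). \]
   Context: Online first-price auction over $T$ rounds: at each round $t$ the learner observes a private value $v_t\in[0,1]$, submits a bid $b_t\in[0,1]$ (possibly randomized, depending only on past $(v_s,m_s)_{s<t}$ and $v_t$), then observes $m_t\in[0,1]$, the highest bid of the other bidders, and receives reward $r(b_t;v_t,m_t)$ with $r(b;v,m)\coloneqq(v-b)\mathbbm{1}(b\ge m)$. The expected dynamic regret is $\mathbb{E}[\mathrm{DR}_T(\pi)]\coloneqq\sum_{t=1}^T\max\{v_t-m_t,0\}-\sum_{t=1}^T\mathbb{E}[r(b_t;v_t,m_t)]$. For $L_T\ge0$, $\mathcal{L}\coloneqq\{(v_t,m_t)_{t=1}^T\in[0,1]^{2T}:\sum_{t=2}^T\mathbbm{1}(m_t\ne m_{t-1})\le L_T\}$. $\tilde{O}(\cdot)$ hides polylogarithmic factors in $T$. AR-OMD policy: there are $N=1/\epsilon$ experts, expert $i$ bidding $\min\{v_t,i\epsilon\}$ with reward $r_{t,i}\coloneqq r(\min\{v_t,i\epsilon\};v_t,m_t)$. Time is split into consecutive batches; a new batch begins at round $t+1$ whenever at a round $t$ which is not the first round of its batch one observes $m_t\ne m_{t-1}$. In round $t$ of a batch starting at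 round $t_0$, the learner bids $\min\{v_t,i\epsilon\}$ with probability $p_{t,i}\propto\exp\left(\eta\left(\sum_{s=t_0}^{t-1}r_{s,i}+o_{t,i}\right)\right)$, where the optimism is $o_{t,i}\coloneqq r(\min\{v_t,i\epsilon\};v_t,m_{t-1})$ (with $m_0\in[0,1]$ an arbitrary fixed value). This is optimistic mirror descent on the probability simplex with negative-entropy regularizer $\frac1\eta\sum_ip_i\ln p_i$, restarted at each batch. *)

(* Defs.v *)
From Stdlib Require Import Reals.
Open Scope R_scope.

(* sum_{j=1}^{n} f j *)
Fixpoint rsum (f : nat -> R) (n : nat) : R :=
  match n with O => 0 | S k => rsum f k + f (S k) end.

(* sum_{j=0}^{n-1} f (a + j), i.e. sum_{s=a}^{a+n-1} f s *)
Fixpoint rsum_from (f : nat -> R) (a n : nat) : R :=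
  match n with O => 0 | S k => rsum_from f a k + f (a + k)%nat end.

Definition reward (b v m : R) : R := if Rle_dec m b then v - b else 0.

(* bid of expert i with grid precision eps = 1/N : min{v, i eps} *)
Definition expert_bid (N i : nat) (v : R) : R := Rmin v (INR i / INR N).

Definition switches (m : nat -> R) (T : nat) : nat :=
  (fix sw (t : nat) : nat :=
     match t with
     | O => O
     | S O => O
     | S (S k as t') => (sw t' + (if Req_EM_T (m t) (m t') then 0 else 1))%nat
     end) T.

(* First round of the batch containing round t (rounds start at 1):
   start(1) = 1; a new batch begins at t'+1 iff round t' is not the first
   of its batch and m_{t'} <> m_{t'-1}. *)
Fixpoint batch_start (m : nat -> R) (t : nat) : nat :=
  match t with
  | O => 1%nat
  | S t' =>
      match t' with
      | O => 1%nat
      | S k =>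
          let s := batch_start m t' in
          if andb (Nat.ltb s t') (if Req_EM_T (m t') (m k) then false else true)
          then t else s
      end
  end.

Definition mprev (m0 : R) (m : nat -> R) (t : nat) : R :=
  if Nat.eqb t 1 then m0 else m (t - 1)%nat.

Definition expert_reward (N : nat) (v m : nat -> R) (s i : nat) : R :=
  reward (expert_bid N i (v s)) (v s) (m s).

Definition aromd_weight (eta : R) (N : nat) (m0 : R) (v m : nat -> R)
    (t i : nat) : R :=
  let t0 := batch_start m t in
  exp (eta * (rsum_from (fun s => expert_reward N v m s i) t0 (t - t0)
              + reward (expert_bid N i (v t)) (v t) (mprev m0 m t))).

Definition aromd_prob (eta : R) (N : nat) (m0 : R) (v m : nat -> R)
    (t i : nat) : R :=
  aromd_weight eta N m0 v m t i / rsum (aromd_weight eta N m0 v m t) N.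

Definition aromd_exp_reward (eta : R) (N : nat) (m0 : R) (v m : nat -> R)
    (t : nat) : R :=
  rsum (fun i => aromd_prob eta N m0 v m t i * expert_reward N v m t i) N.

Definition aromd_expected_DR (eta : R) (N : nat) (m0 : R) (v m : nat -> R)
    (T : nat) : R :=
  rsum (fun t => Rmax (v t - m t) 0 - aromd_exp_reward eta N m0 v m t) T.

(* Main.v *)
Require Import Defs.
From Stdlib Require Import Reals Lra Lia.
Open Scope R_scope.

Lemma ln_le_m1 q : 0 < q -> ln q <= q - 1.
Proof. intro h. pose proof (exp_ineq1_le (ln q)). rewrite exp_ln in H; lra. Qed.

Lemma ln_le' a b : 0 < a -> a <= b -> ln a <= ln b.
Proof. intros h1 h2. destruct (Req_dec a b) as [->|n]; [lra|].
  left; apply ln_increasing; lra. Qed.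

Lemma rsum_ext f g n : (forall i, (1 <= i <= n)%nat -> f i = g i) -> rsum f n = rsum g n.
Proof. induction n; simpl; intros; auto. rewrite IHn by (intros; apply H; lia).
  rewrite H by lia; auto. Qed.

Lemma rsum_le f g n : (forall i, (1 <= i <= n)%nat -> f i <= g i) -> rsum f n <= rsum g n.
Proof. induction n; simpl; intros; [lra|].
  assert (rsum f n <= rsum g n) by (apply IHn; intros; apply H; lia).
  assert (f (S n) <= g (S n)) by (apply H; lia). lra. Qed.

Lemma rsum_lin a b f g n : rsum (fun i => a * f i + b * g i) n = a * rsum f n + b * rsum g n.
Proof. induction n; simpl; [ring|]. rewrite IHn; ring. Qed.

Lemma rsum_scal a f n : rsum (fun i => a * f i) n = a * rsum f n.
Proof. induction n; simpl; [ring|]. rewrite IHn; ring. Qed.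

Lemma rsum_nonneg f n : (forall i, 0 <= f i) -> 0 <= rsum f n.
Proof. induction n; simpl; intros; [lra|]. specialize (IHn H). specialize (H (S n)). lra. Qed.

Lemma rsum_pos f n : (1 <= n)%nat -> (forall i, 0 < f i) -> 0 < rsum f n.
Proof. destruct n; [lia|]. intros _ H. simpl.
  assert (0 <= rsum f n) by (apply rsum_nonneg; intros; left; auto).
  specialize (H (S n)). lra. Qed.

Lemma rsum_ge_term f n i : (forall j, 0 <= f j) -> (1 <= i <= n)%nat -> f i <= rsum f n.
Proof. induction n; simpl; intros; [lia|].
  assert (0 <= rsum f n) by (apply rsum_nonneg; auto).
  destruct (Nat.eq_dec i (S n)) as [->|ne]. lra.
  assert (f i <= rsum f n) by (apply IHn; auto; lia). specialize (H (S n)). lra. Qed.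

Lemma rsum_from_le f g a n : (forall j, (j < n)%nat -> f (a + j)%nat <= g (a + j)%nat) ->
  rsum_from f a n <= rsum_from g a n.
Proof. induction n; simpl; intros; [lra|].
  assert (rsum_from f a n <= rsum_from g a n) by (apply IHn; intros; apply H; lia).
  assert (f (a+n)%nat <= g (a+n)%nat) by (apply H; lia). lra. Qed.

Lemma KL N eta (x y : nat -> R) : (1 <= N)%nat -> 0 < eta ->
  (ln (rsum (fun i => exp (eta*(x i + y i))) N) - ln (rsum (fun i => exp (eta * x i)) N)) / eta
  <= rsum (fun i => exp (eta*(x i + y i)) / rsum (fun j => exp (eta*(x j + y j))) N * y i) N.
Proof.
  intros hN he.
  set (Z := rsum (fun j => exp (eta*(x j + y j))) N).
  set (U := rsum (fun j => exp (eta*(x j))) N).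
  assert (hZ : 0 < Z) by (apply rsum_pos; auto; intros; apply exp_pos).
  assert (hU : 0 < U) by (apply rsum_pos; auto; intros; apply exp_pos).
  set (alg := rsum _ N).
  assert (key : forall i, (-eta) * (exp (eta*(x i + y i)) / Z * y i) + (ln Z - ln U) * (/Z * exp (eta*(x i + y i)))
     <= /U * exp (eta * x i) - /Z * exp (eta*(x i + y i))).
  { intro i. set (w := exp (eta*(x i + y i))). set (u := exp (eta * x i)).
    assert (hw : 0 < w) by apply exp_pos. assert (hu : 0 < u) by apply exp_pos.
    set (q := u * Z / (w * U)).
    assert (hq : 0 < q) by (unfold q; apply Rdiv_lt_0_compat; apply Rmult_lt_0_compat; auto).
    assert (lq : ln q = eta * x i - eta * (x i + y i) + ln Z - ln U).
    { unfold q, Rdiv. rewrite ln_mult, ln_mult, ln_Rinv, ln_mult; try apply Rmult_lt_0_compat; auto;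
      try apply Rinv_0_lt_compat; try apply Rmult_lt_0_compat; auto.
      unfold u, w; rewrite !ln_exp; ring. }
    pose proof (ln_le_m1 q hq) as L. rewrite lq in L.
    assert (hp : 0 <= w / Z) by (left; apply Rdiv_lt_0_compat; auto).
    pose proof (Rmult_le_compat_l _ _ _ hp L) as L2.
    assert (E : w / Z * (q - 1) = /U * u - /Z * w) by (unfold q; field; lra).
    rewrite E in L2. replace (-eta * (w / Z * y i) + (ln Z - ln U) * (/ Z * w))
      with (w / Z * (eta * x i - eta * (x i + y i) + ln Z - ln U)) by (field; lra). exact L2. }
  pose proof (rsum_le _ _ N (fun i _ => key i)) as S.
  rewrite rsum_lin in S.
  replace (rsum (fun i => / U * exp (eta * x i) - / Z * exp (eta * (x i + y i))) N)
    with (/U * rsum (fun i => exp (eta * x i)) N + (-1) * (/Z * rsum (fun i => exp (eta * (x i + y i))) N)) in S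
    by (symmetry; transitivity (rsum (fun i => /U * exp (eta * x i) + (- /Z) * exp (eta * (x i + y i))) N);
        [apply rsum_ext; intros; ring | rewrite rsum_lin; ring]).
  rewrite rsum_scal in S. fold Z U alg in S.
  replace (/U * U) with 1 in S by (field; lra). replace (/Z * Z) with 1 in S by (field; lra).
  apply (Rmult_le_reg_l eta); auto. unfold Rdiv. replace (eta * ((ln Z - ln U) * / eta)) with (ln Z - ln U) by (field; lra).
  lra.
Qed.

Lemma BadB N eta (x y : nat -> R) : (1 <= N)%nat -> 0 < eta -> (forall i, y i <= 1) ->
  ln (rsum (fun i => exp (eta*(x i + y i))) N) / eta <= ln (rsum (fun i => exp (eta * x i)) N) / eta + 1.
Proof.
  intros hN he hy.
  assert (hU : 0 < rsum (fun j => exp (eta*(x j))) N) by (apply rsum_pos; auto; intros; apply exp_pos).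
  assert (hZ : 0 < rsum (fun j => exp (eta*(x j + y j))) N) by (apply rsum_pos; auto; intros; apply exp_pos).
  assert (le : rsum (fun i => exp (eta*(x i + y i))) N <= exp eta * rsum (fun i => exp (eta * x i)) N).
  { rewrite <- rsum_scal. apply rsum_le; intros. rewrite <- exp_plus.
    destruct (Req_dec (eta * (x i + y i)) (eta + eta * x i)) as [E|E]. rewrite E; lra.
    left; apply exp_increasing. specialize (hy i). nra. }
  apply ln_le' in le; auto. rewrite ln_mult, ln_exp in le; auto; [|apply exp_pos].
  apply (Rmult_le_reg_l eta); auto. unfold Rdiv.
  replace (eta * (ln (rsum (fun i : nat => exp (eta * (x i + y i))) N) * / eta)) with (ln (rsum (fun i : nat => exp (eta * (x i + y i))) N)) by (field; lra).
  replace (eta * (ln (rsum (fun i : nat => exp (eta * x i)) N) * / eta + 1)) with (ln (rsum (fun i : nat => exp (eta * x i)) N) + eta) by (field; lra).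
  lra.
Qed.
Lemma Rdiv_le_0_compat a b : 0 <= a -> 0 < b -> 0 <= a / b.
Proof. intros. unfold Rdiv. apply Rmult_le_pos; auto. left; apply Rinv_0_lt_compat; auto. Qed.

Lemma grid_exists N x : (1 <= N)%nat -> 0 <= x <= INR N -> exists i, (1 <= i <= N)%nat /\ x <= INR i /\ INR i <= x + 1.
Proof.
  intro hN. destruct N as [|n]; [lia|]. clear hN. revert x. induction n; intros x hx.
  - exists 1%nat. simpl in *. split; [lia|lra].
  - destruct (Rle_dec x (INR (S n))) as [l|l].
    + destruct (IHn x) as [i [h1 h2]]; [lra|]. exists i. split; [lia|auto].
    + exists (S (S n)). pose proof (S_INR (S n)). split; [lia|]. apply Rnot_le_lt in l. lra.
Qed.

Section Main.
Variables (eta : R) (N : nat) (m0 : R) (v m : nat -> R) (T : nat).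
Hypothesis hN : (1 <= N)%nat.
Hypothesis he : 0 < eta.
Hypothesis Hb : forall t, (1 <= t <= T)%nat -> 0 <= v t <= 1 /\ 0 <= m t <= 1.

Definition r s i := expert_reward N v m s i.
Definition Sb t := batch_start m t.
Definition X t i := rsum_from (fun s => r s i) (Sb t) (t - Sb t).
Definition Psi t := ln (rsum (fun i => exp (eta*(X t i + r t i))) N) / eta.
Definition Prev t := ln (rsum (fun i => exp (eta * X t i)) N) / eta.
Definition bench s := Rmax (v s - m s) 0.
Definition bad s := if Req_EM_T (mprev m0 m s) (m s) then 0 else 1.
Definition benchp s := bench s - / INR N - 2 * bad s.
Definition W t := rsum_from benchp (Sb t) (t - Sb t) + benchp t.
Definition alg t := aromd_exp_reward eta N m0 v m t.
Definition F t := rsum (fun s => bench s - alg s) t.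
Definition cc := ln (INR N) / eta.
Definition swi t := match t with S (S k) => if Req_EM_T (m (S (S k))) (m (S k)) then 0 else 1 | _ => 0 end.
Definition G t := F t + Psi t - W t.

Lemma INR_N_pos : 0 < INR N.
Proof. apply lt_0_INR; lia. Qed.

Lemma reward_nonneg b vv mm : b <= vv -> 0 <= reward b vv mm.
Proof. intros; unfold reward; destruct Rle_dec; lra. Qed.

Lemma r_nonneg s i : 0 <= r s i.
Proof. unfold r, expert_reward, expert_bid. apply reward_nonneg. apply Rmin_l. Qed.

Lemma r_le1 s i : v s <= 1 -> r s i <= 1.
Proof. intros h. unfold r, expert_reward, expert_bid, reward.
  assert (0 <= INR i / INR N) by (apply Rdiv_le_0_compat; [apply pos_INR| apply INR_N_pos]).
  unfold Rmin; destruct Rle_dec; destruct Rle_dec; lra. Qed.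

Lemma bad_01 s : 0 <= bad s <= 1.
Proof. unfold bad; destruct Req_EM_T; lra. Qed.

Lemma swi_01 s : 0 <= swi s <= 1.
Proof. destruct s as [|[|k]]; simpl; try lra. destruct Req_EM_T; lra. Qed.

Lemma cc_nonneg : 0 <= cc.
Proof. unfold cc. apply Rdiv_le_0_compat; auto. rewrite <- ln_1. apply ln_le'; [lra|].
  apply (le_INR 1); auto. Qed.

Lemma round t : v t <= 1 -> Psi t - Prev t <= alg t + bad t.
Proof.
  intros hv. unfold bad. destruct Req_EM_T as [e|e].
  - assert (weq : forall i, aromd_weight eta N m0 v m t i = exp (eta * (X t i + r t i))).
    { intro i. unfold aromd_weight, X, r, expert_reward, Sb. cbv zeta. rewrite e. reflexivity. }
    assert (A : alg t = rsum (fun i => exp (eta*(X t i + r t i)) / rsum (fun j => exp (eta*(X t j + r t j))) N * r t i) N).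
    { unfold alg, aromd_exp_reward, aromd_prob. apply rsum_ext; intros.
      rewrite weq. rewrite (rsum_ext _ (fun j => exp (eta * (X t j + r t j)))) by (intros; apply weq).
      reflexivity. }
    rewrite A. pose proof (KL N eta (X t) (r t) hN he). unfold Psi, Prev. unfold Rdiv in *. lra.
  - assert (0 <= alg t).
    { unfold alg, aromd_exp_reward. apply rsum_nonneg. intro i. apply Rmult_le_pos; [|apply r_nonneg].
      unfold aromd_prob. apply Rdiv_le_0_compat. left; apply exp_pos.
      apply rsum_pos; auto. intros; apply exp_pos. }
    pose proof (BadB N eta (X t) (r t) hN he (fun i => r_le1 t i hv)). unfold Psi, Prev. lra.
Qed.

Lemma bs_SS k : batch_start m (S (S k)) =
  if andb (Nat.ltb (batch_start m (S k)) (S k)) (if Req_EM_T (m (S k)) (m k) then false else true)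
  then S (S k) else batch_start m (S k).
Proof. reflexivity. Qed.

Lemma step_cases k : (Sb (S (S k)) = S (S k) /\ (Sb (S k) < S k)%nat /\ m (S k) <> m k) \/ Sb (S (S k)) = Sb (S k).
Proof. unfold Sb; rewrite bs_SS. destruct (Nat.ltb _ _) eqn:E; destruct Req_EM_T; simpl; auto.
  left. apply Nat.ltb_lt in E. auto. Qed.

Lemma Pinv t : (1 <= t)%nat -> (1 <= Sb t <= t)%nat /\ forall s, (Sb t <= s < t)%nat -> m s = m (Sb t).
Proof.
  induction t as [|t IH]; intros h; [lia|].
  destruct t as [|k]. { unfold Sb; simpl. split; [lia|]. intros; lia. }
  destruct (IH ltac:(lia)) as [[h1 h2] h3].
  destruct (step_cases k) as [[E [E2 E3]]|E]; rewrite E.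
  - split; [lia|]. intros; lia.
  - split; [lia|]. intros s hs. destruct (Nat.eq_dec s (S k)) as [->|ne]; [|apply h3; lia].
    destruct (Nat.eq_dec (Sb (S k)) (S k)) as [e|ne']. rewrite e; auto.
    unfold Sb in E, ne'. rewrite bs_SS in E.
    assert (Nat.ltb (batch_start m (S k)) (S k) = true) by (apply Nat.ltb_lt; unfold Sb in h2; lia).
    rewrite H in E. destruct Req_EM_T as [e|e]; cbv beta iota delta [andb] in E.
    + rewrite e. apply h3. unfold Sb in *; lia.
    + unfold Sb in *; lia.
Qed.

Lemma rsum_one n : rsum (fun _ => 1) n = INR n.
Proof. induction n. reflexivity. rewrite S_INR, <- IHn. reflexivity. Qed.

Lemma Prev_start t : Sb t = t -> Prev t = cc.
Proof. intros E. unfold Prev, cc, X. rewrite E, Nat.sub_diag. simpl.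
  rewrite (rsum_ext _ (fun _ => 1)), rsum_one; auto. intros; rewrite Rmult_0_r, exp_0; auto. Qed.

Lemma W_start t : Sb t = t -> W t = benchp t.
Proof. intros E. unfold W. rewrite E, Nat.sub_diag. simpl. ring. Qed.

Lemma Prev_same t : Sb (S t) = Sb t -> (Sb t <= t)%nat -> Prev (S t) = Psi t.
Proof. intros E h. unfold Prev, Psi. f_equal. f_equal. apply rsum_ext; intros. f_equal. f_equal.
  unfold X. rewrite E. replace (S t - Sb t)%nat with (S (t - Sb t)) by lia. simpl.
  replace (Sb t + (t - Sb t))%nat with t by lia. reflexivity. Qed.

Lemma W_same t : Sb (S t) = Sb t -> (Sb t <= t)%nat -> W (S t) = W t + benchp (S t).
Proof. intros E h. unfold W. rewrite E. replace (S t - Sb t)%nat with (S (t - Sb t)) by lia. simpl.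
  replace (Sb t + (t - Sb t))%nat with t by lia. reflexivity. Qed.

Lemma sw_S t : INR (switches m (S t)) = INR (switches m t) + swi (S t).
Proof. destruct t as [|k]. simpl. ring.
  change (switches m (S (S k))) with (switches m (S k) + (if Req_EM_T (m (S (S k))) (m (S k)) then 0 else 1))%nat.
  rewrite plus_INR. simpl swi. destruct Req_EM_T; simpl; ring. Qed.

Lemma bad_swi t : (1 <= t)%nat -> bad (S t) <= swi (S t).
Proof. intros h. destruct t as [|k]; [lia|]. unfold bad, mprev. simpl Nat.eqb.
  replace (S (S k) - 1)%nat with (S k) by lia. simpl swi.
  destruct Req_EM_T as [e|e]; destruct Req_EM_T as [e'|e']; try lra; exfalso; auto. Qed.

Lemma termA vv mm i : 0 <= vv <= 1 -> mm <= INR i / INR N <= mm + / INR N ->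
  Rmax (vv - mm) 0 - / INR N <= reward (expert_bid N i vv) vv mm.
Proof. intros hv hc. unfold expert_bid, reward, Rmax, Rmin.
  set (c := INR i / INR N) in *. assert (0 < / INR N) by (apply Rinv_0_lt_compat, INR_N_pos).
  repeat destruct Rle_dec; lra. Qed.

Lemma termB s i : v s <= 1 -> 0 <= m s -> bad s = 1 -> benchp s <= r s i.
Proof. intros h1 h2 hb. unfold benchp, bench. rewrite hb. pose proof (r_nonneg s i).
  assert (0 < / INR N) by (apply Rinv_0_lt_compat, INR_N_pos).
  unfold Rmax; destruct Rle_dec; lra. Qed.

Lemma FactA t : (1 <= t <= T)%nat -> W t <= Psi t.
Proof.
  intros ht. destruct (Pinv t ltac:(lia)) as [[h1 h2] h3].
  set (a := Sb t) in *.
  destruct (Hb a ltac:(lia)) as [_ hma].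
  destruct (grid_exists N (m a * INR N) hN) as [i [hi [hi1 hi2]]].
  { pose proof INR_N_pos. split; nra. }
  assert (hc : m a <= INR i / INR N <= m a + / INR N).
  { pose proof INR_N_pos. split.
    - apply (Rmult_le_reg_r (INR N)); auto. unfold Rdiv. rewrite Rmult_assoc, Rinv_l; lra.
    - apply (Rmult_le_reg_r (INR N)); auto. unfold Rdiv. rewrite Rmult_assoc, Rinv_l by lra.
      rewrite Rmult_plus_distr_r, Rinv_l; lra. }
  assert (term : forall s, (a <= s <= t)%nat -> (m s = m a \/ bad s = 1) -> benchp s <= r s i).
  { intros s hs [e|e]; destruct (Hb s ltac:(lia)) as [hv hm].
    - unfold benchp, bench, r, expert_reward. rewrite e. pose proof (termA (v s) (m a) i hv hc).
      pose proof (bad_01 s). lra.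
    - apply termB; auto; lra. }
  assert (L1 : W t <= X t i + r t i).
  { unfold W, X. fold a. apply Rplus_le_compat.
    - apply rsum_from_le. intros j hj. apply term; [lia|]. left. apply h3. lia.
    - apply term; [lia|]. destruct (Nat.eq_dec a t) as [ea|ea]. { left; rewrite ea; auto. }
      unfold bad. destruct Req_EM_T as [e|e]; [|auto].
      left. rewrite <- e. unfold mprev. destruct (Nat.eqb t 1) eqn:E.
      + apply Nat.eqb_eq in E. lia.
      + apply h3. lia. }
  assert (L2 : X t i + r t i <= Psi t).
  { unfold Psi. set (Z := rsum _ N).
    assert (hz : exp (eta * (X t i + r t i)) <= Z).
    { apply (rsum_ge_term (fun i0 => exp (eta * (X t i0 + r t i0)))); auto. intros; left; apply exp_pos. }
    apply ln_le' in hz; [|apply exp_pos]. rewrite ln_exp in hz.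
    apply (Rmult_le_reg_l eta); auto. unfold Rdiv. replace (eta * (ln Z * / eta)) with (ln Z) by (field; lra). lra. }
  lra.
Qed.

Lemma Inv t : (1 <= t <= T)%nat ->
  G t <= INR t / INR N + (cc + 3) * (1 + INR (switches m t)) - cc * swi t.
Proof.
  pose proof cc_nonneg as hc. pose proof INR_N_pos as hNp.
  induction t as [|t IH]; intros ht; [lia|].
  destruct t as [|k].
  - assert (S1 : Sb 1 = 1%nat) by reflexivity.
    pose proof (round 1 ltac:(destruct (Hb 1 ltac:(lia)); lra)) as R1.
    rewrite (Prev_start 1 S1) in R1.
    unfold G. rewrite (W_start 1 S1).
    change (F 1) with (0 + (bench 1 - alg 1)).
    change (INR (switches m 1)) with 0. change (swi 1) with 0.
    pose proof (bad_01 1). unfold benchp. change (INR 1) with 1. unfold Rdiv. lra.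
  - set (t' := S k) in *.
    destruct (Pinv t' ltac:(lia)) as [[h1 h2] h3].
    pose proof (round (S t') ltac:(destruct (Hb (S t') ltac:(lia)); lra)) as R1.
    pose proof (bad_swi t' ltac:(lia)) as BS.
    pose proof (sw_S t') as SW.
    pose proof (FactA t' ltac:(lia)) as FA.
    pose proof (IH ltac:(lia)) as IH'.
    assert (FS : F (S t') = F t' + (bench (S t') - alg (S t'))) by reflexivity.
    assert (DS : INR (S t') / INR N = INR t' / INR N + / INR N) by (rewrite S_INR; field; lra).
    pose proof (swi_01 t'). pose proof (swi_01 (S t')). pose proof (bad_01 (S t')).
    assert (cs : 0 <= cc * swi t') by (apply Rmult_le_pos; lra).
    unfold G in *. rewrite DS, SW, FS.
    destruct (step_cases k) as [[E [E2 E3]]|E].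
    + rewrite (Prev_start (S t') E) in R1. rewrite (W_start (S t') E).
      assert (sw1 : swi t' = 1).
      { unfold t'. destruct k as [|j]. { unfold t' in h1, E2. lia. }
        simpl swi. destruct Req_EM_T; [contradiction|reflexivity]. }
      rewrite sw1 in IH'. unfold benchp. lra.
    + rewrite (Prev_same t' E h2) in R1. rewrite (W_same t' E h2). unfold benchp in *. lra.
Qed.
End Main.

Theorem theorem2 :
  exists (eta : nat -> R) (N : nat -> nat),
    (forall T : nat, 0 < eta T /\ (1 <= N T)%nat) /\
    forall m0 : R, 0 <= m0 <= 1 ->
    forall LT : nat -> R,
      (forall T : nat, 0 <= LT T) ->
      (forall e : R, 0 < e -> exists T0 : nat, forall T : nat,
          (T0 <= T)%nat -> LT T <= e * INR T) ->
      exists (C : R) (k : nat) (T0 : nat),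
        forall T : nat, (T0 <= T)%nat ->
        forall v m : nat -> R,
          (forall t : nat, (1 <= t <= T)%nat ->
             0 <= v t <= 1 /\ 0 <= m t <= 1) ->
          INR (switches m T) <= LT T ->
          aromd_expected_DR (eta T) (N T) m0 v m T
            <= C * (ln (INR T)) ^ k * (LT T + 1).
Proof.
  exists (fun T => INR T + 1), (fun T => S T). split.
  { intros T. split; [pose proof (pos_INR T); lra | lia]. }
  intros m0 hm0 LT hLT _. exists 5, 0%nat, 0%nat.
  intros T _ v m Hb Hsw. simpl pow. rewrite Rmult_1_r.
  pose proof (hLT T).
  destruct T as [|T'].
  { unfold aromd_expected_DR. simpl. lra. }
  set (T := S T') in *.
  assert (he : 0 < INR T + 1) by (pose proof (pos_INR T); lra).
  assert (hN : (1 <= S T)%nat) by lia.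
  pose proof (Inv (INR T + 1) (S T) m0 v m T hN he Hb T ltac:(unfold T; lia)) as I.
  pose proof (FactA (INR T + 1) (S T) m0 v m T hN he Hb T ltac:(unfold T; lia)) as FA.
  assert (DR : aromd_expected_DR (INR T + 1) (S T) m0 v m T = F (INR T + 1) (S T) m0 v m T) by reflexivity.
  rewrite DR.
  unfold G in I.
  set (c := cc (INR T + 1) (S T)) in *.
  assert (c1 : c <= 1).
  { unfold c, cc. rewrite S_INR. pose proof (ln_le_m1 (INR T + 1) he).
    apply (Rmult_le_reg_l (INR T + 1)); auto. unfold Rdiv.
    replace ((INR T + 1) * (ln (INR T + 1) * / (INR T + 1))) with (ln (INR T + 1)) by (field; lra). lra. }
  pose proof (cc_nonneg (INR T + 1) (S T) hN he). fold c in H0.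
  pose proof (swi_01 m T).
  assert (cs : 0 <= c * swi m T) by (apply Rmult_le_pos; lra).
  assert (TN : INR T / INR (S T) <= 1).
  { rewrite S_INR. apply (Rmult_le_reg_l (INR T + 1)); auto. unfold Rdiv.
    replace ((INR T + 1) * (INR T * / (INR T + 1))) with (INR T) by (field; lra). lra. }
  pose proof (pos_INR (switches m T)).
  assert (K : (c + 3) * (1 + INR (switches m T)) <= 4 * (1 + LT T)).
  { apply Rmult_le_compat; lra. }
  lra.
Qed.
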